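(* For $z\in\mathbb{C}$ with $\Re z>-1$, the functions $$u_z(y):=\frac{e^{-zy}-1-z(e^{-y}-1)}{e^{y}-1},\qquad v_z(y):=ze^{-y}-u_z(y)=\frac{1-e^{-zy}}{e^{y}-1}$$ (extended by continuity at $y=0$) are bounded and continuous on $[0,\infty)$. Furthermore, there exist constants $C_{\Re z},C_{1,\Re z},C_{2,\Re z},\epsilon_{1,\Re z},\epsilon_{2,\Re z}>0$, depending only on $\Re z$, such that for all $y\ge0$ and all $x\ge C_{\Re z}$, $$|v_z(y)|\le C_{1,\Re z}\,|z|\,e^{-\epsilon_{1,\Re z}y}\qquad\text{and}\qquad |v_z(x)|\le C_{2,\Re z}\,e^{-\epsilon_{2,\Re z}x}.$$ *)

(* Defs.v *)
From Stdlib Require Import Reals.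
From Coquelicot Require Export Coquelicot.
Open Scope R_scope.

Definition Cexp (w : C) : C :=
  (exp (Re w) * cos (Im w), exp (Re w) * sin (Im w)).

Definition u_fun (z : C) (y : R) : C :=
  if Req_EM_T y 0 then RtoC 0
  else ((Cexp (- (z * RtoC y)) - RtoC 1 - z * (RtoC (exp (- y)) - RtoC 1))
        / RtoC (exp y - 1))%C.

Definition v_fun (z : C) (y : R) : C :=
  if Req_EM_T y 0 then z
  else ((RtoC 1 - Cexp (- (z * RtoC y))) / RtoC (exp y - 1))%C.

Definition continuous_on_nonneg (f : R -> C) : Prop :=
  forall x : R, 0 <= x ->
    filterlim f (within (fun t : R => 0 <= t) (locally x)) (locally (f x)).

Definition bounded_on_nonneg (f : R -> C) : Prop :=
  exists M : R, forall y : R, 0 <= y -> Cmod (f y) <= M.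

(* Main.v *)
Require Import Defs.
From Stdlib Require Import Reals Lra.
From Coquelicot Require Import Coquelicot.
Open Scope R_scope.

Lemma abs_sin_le x : Rabs (sin x) <= Rabs x.
Proof.
  assert (K : forall t, 0 < t -> Rabs (sin t) <= t).
  { intros t Ht. pose proof (sin_lt_x t Ht). pose proof (SIN_bound t).
    destruct (Rle_lt_dec t 1).
    - assert (0 <= sin t). { apply sin_ge_0; try lra. pose proof PI2_1; lra. }
      rewrite Rabs_right; lra.
    - unfold Rabs; destruct (Rcase_abs (sin t)); lra. }
  destruct (Rtotal_order x 0) as [H|[H|H]].
  - pose proof (K (-x) ltac:(lra)) as K'. rewrite sin_neg, Rabs_Ropp in K'.
    rewrite (Rabs_left x) by lra. exact K'.
  - subst; rewrite sin_0, Rabs_R0; lra.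
  - rewrite (Rabs_right x) by lra. apply K; lra.
Qed.

Lemma one_minus_cos_le x : Rabs (1 - cos x) <= Rabs x.
Proof.
  replace x with (2 * (x/2)) at 1 by field. rewrite cos_2a_sin.
  pose proof (abs_sin_le (x/2)). pose proof (SIN_bound (x/2)).
  replace (1 - (1 - 2 * sin (x / 2) * sin (x / 2))) with (2 * (sin (x/2) * sin (x/2))) by ring.
  rewrite Rabs_mult, Rabs_mult, (Rabs_right 2) by lra.
  assert (Rabs (sin (x/2)) <= 1) by (unfold Rabs; destruct Rcase_abs; lra).
  assert (Rabs (x/2) = Rabs x / 2).
  { unfold Rdiv. rewrite Rabs_mult, Rabs_inv, (Rabs_right 2) by lra. reflexivity. }
  pose proof (Rabs_pos (sin (x/2))).
  nra.
Qed.

Lemma Cmod_pair_le x y : Cmod (x, y) <= Rabs x + Rabs y.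
Proof.
  unfold Cmod; simpl.
  rewrite <- (sqrt_pow2 (Rabs x + Rabs y)) by (pose proof (Rabs_pos x); pose proof (Rabs_pos y); lra).
  apply sqrt_le_1_alt.
  pose proof (Rabs_pos x); pose proof (Rabs_pos y).
  rewrite <- (pow2_abs x) at 1. rewrite <- (pow2_abs y) at 1. nra.
Qed.

Lemma exp_le_inc x y : x <= y -> exp x <= exp y.
Proof. intros H; destruct (Req_dec x y); [subst; lra| left; apply exp_increasing; lra]. Qed.

Lemma exp_inj' x y : exp x = exp y -> x = y.
Proof.
  intros H; destruct (Rtotal_order x y) as [h|[h|h]]; auto;
  pose proof (exp_increasing _ _ h); lra.
Qed.

Lemma exp_bound1 p y : 0 <= y -> Rabs (1 - exp (-(p*y))) <= Rabs p * y * exp (-(Rmin p 0 * y)).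
Proof.
  intros Hy. unfold Rmin; destruct (Rle_dec p 0).
  - rewrite (Rabs_left1 p) by lra.
    pose proof (exp_ineq1_le (p*y)).
    assert (E: exp (p*y) * exp (-(p*y)) = 1) by (rewrite <- exp_plus; replace (p*y + -(p*y)) with 0 by ring; apply exp_0).
    assert (0 < exp (-(p*y))) by apply exp_pos.
    assert (exp (-(p*y)) >= 1).
    { assert (p*y <= 0) by nra. pose proof (exp_ineq1_le (-(p*y))). lra. }
    rewrite Rabs_left1 by lra.
    assert (0 <= (exp (p*y) - (1 + p*y)) * exp (-(p*y))) by (apply Rmult_le_pos; lra).
    nra.
  - rewrite (Rabs_right p) by lra. replace (- (0*y)) with 0 by ring. rewrite exp_0.
    pose proof (exp_ineq1_le (-(p*y))).
    assert (exp (-(p*y)) <= 1). { rewrite <- exp_0. apply exp_le_inc. nra. }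
    rewrite Rabs_right by lra. nra.
Qed.

Lemma one_minus_Cexp p q y : (RtoC 1 - Cexp (- ((p,q) * RtoC y)))%C =
  (1 - exp (-(p*y)) * cos (q*y), exp (-(p*y)) * sin (q*y)).
Proof.
  unfold Cexp, Cminus, Cplus, Copp, Cmult, RtoC; simpl.
  replace (- (p * y - q * 0)) with (-(p*y)) by ring.
  replace (- (p * 0 + q * y)) with (-(q*y)) by ring.
  rewrite cos_neg, sin_neg. f_equal; ring.
Qed.

Lemma Cmod_Cexp w : Cmod (Cexp w) = exp (Re w).
Proof.
  destruct w as [a b]. unfold Cexp, Cmod; simpl.
  pose proof (sin2_cos2 b) as E. unfold Rsqr in E.
  match goal with |- sqrt ?X = _ => replace X with (exp a ^ 2)
    by (transitivity (exp a ^ 2 * (sin b * sin b + cos b * cos b)); [rewrite E; ring | ring]) end.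
  apply sqrt_pow2. left; apply exp_pos.
Qed.

Lemma div_RtoC x1 x2 r : r <> 0 -> ((x1, x2) / RtoC r)%C = (x1 / r, x2 / r).
Proof.
  intros Hr. unfold Cdiv, Cmult, Cinv, RtoC; simpl. f_equal; field; auto.
Qed.

Lemma abs_le_Cmod p q : Rabs p <= Cmod (p,q) /\ Rabs q <= Cmod (p,q).
Proof.
  pose proof (Rmax_Cmod (p,q)) as H; simpl in H.
  pose proof (Rmax_l (Rabs p) (Rabs q)); pose proof (Rmax_r (Rabs p) (Rabs q)). lra.
Qed.

Lemma key1 p q y : 0 <= y ->
  Cmod (RtoC 1 - Cexp (- ((p,q) * RtoC y)))%C <= 3 * Cmod (p,q) * y * exp (-(Rmin p 0 * y)).
Proof.
  intros Hy. rewrite one_minus_Cexp. eapply Rle_trans; [apply Cmod_pair_le|].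
  set (e := exp (-(p*y))). set (M := exp (-(Rmin p 0 * y))).
  assert (He : 0 < e) by apply exp_pos.
  assert (HeM : e <= M).
  { apply exp_le_inc. pose proof (Rmin_l p 0). nra. }
  pose proof (exp_bound1 p y Hy) as B1. fold e M in B1.
  pose proof (one_minus_cos_le (q*y)) as B2.
  pose proof (abs_sin_le (q*y)) as B3.
  rewrite Rabs_mult, (Rabs_right y) in B2, B3 by lra.
  destruct (abs_le_Cmod p q) as [Hp Hq].
  replace (1 - e * cos (q*y)) with ((1 - e) + e * (1 - cos (q*y))) by ring.
  eapply Rle_trans.
  { apply Rplus_le_compat_r. apply Rabs_triang. }
  rewrite !Rabs_mult, (Rabs_right e) by lra.
  pose proof (Rabs_pos q). pose proof (Rabs_pos p).
  pose proof (Rabs_pos (1 - cos (q*y))). pose proof (Rabs_pos (sin (q*y))).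
  assert (e * Rabs (1 - cos (q*y)) <= M * (Rabs q * y)).
  { apply Rmult_le_compat; lra. }
  assert (e * Rabs (sin (q*y)) <= M * (Rabs q * y)).
  { apply Rmult_le_compat; lra. }
  assert (0 <= M) by (unfold M; left; apply exp_pos).
  assert (Rabs p * y * M <= Cmod (p,q) * y * M).
  { apply Rmult_le_compat_r; auto. apply Rmult_le_compat_r; lra. }
  assert (M * (Rabs q * y) <= M * (Cmod (p,q) * y)).
  { apply Rmult_le_compat_l; auto. apply Rmult_le_compat_r; lra. }
  lra.
Qed.

Lemma key2 p q y :
  Cmod (RtoC 1 - Cexp (- ((p,q) * RtoC y)))%C <= 1 + exp (-(p*y)).
Proof.
  unfold Cminus. eapply Rle_trans; [apply Cmod_triangle|].
  rewrite Cmod_opp, Cmod_Cexp, Cmod_1. simpl.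
  replace (- (p * y - q * 0)) with (-(p*y)) by ring. lra.
Qed.

Lemma RtoC_neq0 r : r <> 0 -> RtoC r <> 0%C.
Proof. intros Hr H. apply (f_equal fst) in H. simpl in H. lra. Qed.

Lemma v_form z y : y <> 0 ->
  v_fun z y = ((RtoC 1 - Cexp (- (z * RtoC y))) / RtoC (exp y - 1))%C.
Proof. intros Hy. unfold v_fun. destruct Req_EM_T; [contradiction|reflexivity]. Qed.

Lemma expm1_pos y : 0 < y -> 0 < exp y - 1.
Proof. intros. pose proof (exp_ineq1_le y). lra. Qed.

Lemma Cmod_v_pos z y : 0 < y ->
  Cmod (v_fun z y) = Cmod (RtoC 1 - Cexp (- (z * RtoC y)))%C / (exp y - 1).
Proof.
  intros Hy. pose proof (expm1_pos y Hy).
  rewrite v_form by lra. rewrite Cmod_div by (apply RtoC_neq0; lra).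
  rewrite Cmod_R, Rabs_right by lra. reflexivity.
Qed.

Lemma div_le_by X D Y : 0 < D -> X <= Y * D -> X / D <= Y.
Proof.
  intros HD H. apply Rmult_le_reg_r with D; auto.
  replace (X / D * D) with X by (field; lra). exact H.
Qed.

Lemma exp_split p y : let d := 1 + Rmin p 0 in
  exp (-(Rmin p 0 * y)) * (exp (d/2*y) * exp (d/2*y)) = exp y /\
  exp (- (d/2) * y) * exp (d/2*y) = 1.
Proof.
  intros d. split; rewrite <- !exp_plus.
  - f_equal. unfold d. field.
  - replace (- (d / 2) * y + d / 2 * y) with 0 by ring. apply exp_0.
Qed.

Lemma vb1 p q y : -1 < p -> 0 <= y ->
  Cmod (v_fun (p,q) y) <= 6 / (1 + Rmin p 0) * Cmod (p,q) * exp (- ((1 + Rmin p 0)/2) * y).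
Proof.
  intros Hp Hy. set (d := 1 + Rmin p 0).
  assert (Hd0 : 0 < d). { unfold d, Rmin; destruct Rle_dec; lra. }
  assert (Hd1 : d <= 1). { unfold d; pose proof (Rmin_r p 0); lra. }
  pose proof (Cmod_ge_0 (p,q)) as HC.
  assert (H6 : 1 <= 6 / d). { apply Rmult_le_reg_r with d; auto. unfold Rdiv.
    rewrite Rmult_assoc, Rinv_l by lra. lra. }
  destruct (Req_dec y 0) as [->|Hy0].
  - unfold v_fun. destruct Req_EM_T; [|congruence].
    rewrite Rmult_0_r, exp_0, Rmult_1_r. nra.
  - assert (Hy' : 0 < y) by lra.
    rewrite Cmod_v_pos by auto.
    pose proof (expm1_pos y Hy') as HA.
    apply div_le_by; auto.
    eapply Rle_trans; [apply key1; lra|].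
    destruct (exp_split p y) as [E1 E2]. fold d in E1, E2.
    set (A := exp y) in *. set (B := exp (d/2*y)) in *.
    set (M := exp (-(Rmin p 0 * y))) in *. set (E' := exp (- (d/2) * y)) in *.
    assert (HB : 1 + d/2*y <= B) by apply exp_ineq1_le.
    assert (HA1 : 1 + y <= A) by apply exp_ineq1_le.
    assert (0 < B) by apply exp_pos.
    assert (key : y * M <= 2 / d * E' * (A - 1)).
    { apply Rmult_le_reg_r with (d * B * B). { apply Rmult_lt_0_compat; [nra|lra]. }
      replace (y * M * (d * B * B)) with (d * y * (M * (B * B))) by ring.
      rewrite E1.
      replace (2 / d * E' * (A - 1) * (d * B * B)) with (2 * B * (A - 1) * (E' * B)) by (field; lra).
      rewrite E2.
      assert (2 * B >= d * (1 + y)) by nra.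
      assert (d * y * A <= d * (1 + y) * (A - 1)) by nra.
      nra. }
    assert (0 <= 3 * Cmod (p,q)) by lra.
    replace (3 * Cmod (p, q) * y * M) with (3 * Cmod (p,q) * (y * M)) by ring.
    replace (6 / d * Cmod (p, q) * E' * (A - 1)) with (3 * Cmod (p,q) * (2 / d * E' * (A - 1))) by (field; lra).
    apply Rmult_le_compat_l; auto.
Qed.

Lemma vb2 p q x : -1 < p -> 1 <= x ->
  Cmod (v_fun (p,q) x) <= 4 * exp (- ((1 + Rmin p 0)/2) * x).
Proof.
  intros Hp Hx. set (d := 1 + Rmin p 0).
  assert (Hd0 : 0 < d). { unfold d, Rmin; destruct Rle_dec; lra. }
  assert (Hd1 : d <= 1). { unfold d; pose proof (Rmin_r p 0); lra. }
  rewrite Cmod_v_pos by lra.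
  pose proof (expm1_pos x ltac:(lra)) as HA.
  apply div_le_by; auto.
  eapply Rle_trans; [apply key2|].
  destruct (exp_split p x) as [E1 E2]. fold d in E1, E2.
  assert (exp (-(p*x)) <= exp (-(Rmin p 0 * x))).
  { apply exp_le_inc. pose proof (Rmin_l p 0). nra. }
  assert (1 <= exp (-(Rmin p 0 * x))).
  { rewrite <- exp_0. apply exp_le_inc. pose proof (Rmin_r p 0). nra. }
  set (A := exp x) in *. set (B := exp (d/2*x)) in *.
  set (M := exp (-(Rmin p 0 * x))) in *. set (E' := exp (- (d/2) * x)) in *.
  assert (HB : 1 + d/2*x <= B) by apply exp_ineq1_le.
  assert (HA1 : 1 + x <= A) by apply exp_ineq1_le.
  assert (0 < B) by apply exp_pos.
  assert (2 * M <= 4 * E' * (A - 1)).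
  { apply Rmult_le_reg_r with (B * B). nra.
    replace (2 * M * (B * B)) with (2 * (M * (B * B))) by ring. rewrite E1.
    replace (4 * E' * (A - 1) * (B * B)) with (4 * B * (A - 1) * (E' * B)) by ring.
    rewrite E2. assert (1 <= B) by nra. assert (0 <= (B - 1) * (A - 1)) by (apply Rmult_le_pos; lra). nra. }
  lra.
Qed.

Definition ext_q (F : R -> R) (l : R) (y : R) : R :=
  if Req_EM_T y 0 then l else F y / y.

Lemma ext_q_cont F l : F 0 = 0 -> derivable_pt_lim F 0 l ->
  (forall x, continuity_pt F x) -> forall x, continuity_pt (ext_q F l) x.
Proof.
  intros F0 HD HC x. destruct (Req_dec x 0) as [->|Hx].
  - intros eps Heps. destruct (HD eps Heps) as [del Hdel].
    exists del. split; [apply cond_pos|]. intros y [[_ Hy0] Hyd].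
    unfold ext_q. destruct (Req_EM_T y 0) as [e|_]; [congruence|].
    destruct (Req_EM_T 0 0) as [_|n]; [|congruence].
    simpl in Hyd. unfold R_dist in *. rewrite Rminus_0_r in Hyd.
    specialize (Hdel y (not_eq_sym Hy0) Hyd).
    rewrite Rplus_0_l, F0, Rminus_0_r in Hdel. exact Hdel.
  - apply continuity_pt_ext_loc with (f := fun y => F y / y).
    + assert (Hr : 0 < Rabs x) by (apply Rabs_pos_lt; auto).
      exists (mkposreal _ Hr). intros y Hy. simpl in Hy.
      unfold ext_q. destruct (Req_EM_T y 0) as [->|]; [|reflexivity].
      exfalso. unfold ball in Hy; simpl in Hy; unfold AbsRing_ball, abs, minus, plus, opp in Hy; simpl in Hy.
      rewrite Rplus_0_l, Rabs_Ropp in Hy. lra.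
    + apply continuity_pt_div; auto. apply derivable_continuous_pt, derivable_pt_id.
Qed.

Lemma C_cont (f : R -> C) x :
  continuity_pt (fun y => fst (f y)) x -> continuity_pt (fun y => snd (f y)) x ->
  filterlim f (locally x) (locally (f x)).
Proof.
  intros H1 H2. apply continuity_pt_filterlim in H1. apply continuity_pt_filterlim in H2.
  apply filterlim_locally. intros eps.
  rewrite filterlim_locally in H1. rewrite filterlim_locally in H2.
  specialize (H1 eps). specialize (H2 eps).
  generalize (filter_and _ _ H1 H2). apply filter_imp.
  intros y [B1 B2]. split; assumption.
Qed.

Definition F1 p q y := 1 - exp (-(p*y)) * cos (q*y).
Definition F2 p q y := exp (-(p*y)) * sin (q*y).
Definition Fe y := exp y - 1.

Lemma cont_of_derive (f : R -> R) x : ex_derive f x -> continuity_pt f x.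
Proof.
  intros H. apply continuity_pt_filterlim. apply (ex_derive_continuous f x H).
Qed.

Lemma F1_der p q : derivable_pt_lim (F1 p q) 0 p.
Proof.
  apply is_derive_Reals. unfold F1. auto_derive; auto.
  rewrite !Rmult_0_r, Ropp_0, exp_0, cos_0, sin_0. ring.
Qed.

Lemma F2_der p q : derivable_pt_lim (F2 p q) 0 q.
Proof.
  apply is_derive_Reals. unfold F2. auto_derive; auto.
  rewrite !Rmult_0_r, Ropp_0, exp_0, cos_0, sin_0. ring.
Qed.

Lemma Fe_der : derivable_pt_lim Fe 0 1.
Proof.
  apply is_derive_Reals. unfold Fe. auto_derive; auto. rewrite exp_0. ring.
Qed.

Lemma expm1_neq y : y <> 0 -> exp y - 1 <> 0.
Proof. intros Hy H. apply Hy. apply exp_inj'. rewrite exp_0. lra. Qed.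

Lemma H_neq y : ext_q Fe 1 y <> 0.
Proof.
  unfold ext_q. destruct Req_EM_T; [lra|].
  unfold Fe. intro H. apply (expm1_neq y n).
  unfold Rdiv in H. apply Rmult_integral in H. destruct H as [H|H]; auto.
  exfalso. apply (Rinv_neq_0_compat y n H).
Qed.

Lemma v_comp p q y :
  fst (v_fun (p,q) y) = ext_q (F1 p q) p y / ext_q Fe 1 y /\
  snd (v_fun (p,q) y) = ext_q (F2 p q) q y / ext_q Fe 1 y.
Proof.
  destruct (Req_dec y 0) as [->|Hy].
  - unfold v_fun, ext_q. destruct Req_EM_T; [|congruence]. simpl. split; field.
  - rewrite v_form by auto. rewrite one_minus_Cexp, div_RtoC by (apply expm1_neq; auto).
    unfold ext_q. destruct Req_EM_T; [contradiction|]. simpl.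
    pose proof (expm1_neq y Hy). unfold F1, F2, Fe.
    split; field; auto.
Qed.

Lemma v_cont p q x : filterlim (v_fun (p,q)) (locally x) (locally (v_fun (p,q) x)).
Proof.
  assert (HC : forall g, (forall y, ex_derive g y) -> forall y, continuity_pt g y).
  { intros g Hg y. apply cont_of_derive, Hg. }
  assert (HH : continuity_pt (ext_q Fe 1) x).
  { apply ext_q_cont. unfold Fe; rewrite exp_0; ring. apply Fe_der.
    apply HC. intros; unfold Fe; auto_derive; auto. }
  apply C_cont.
  - apply continuity_pt_ext with (f := fun y => ext_q (F1 p q) p y / ext_q Fe 1 y).
    { intros y; symmetry; apply v_comp. }
    apply continuity_pt_div; auto; [|apply H_neq].
    apply ext_q_cont. unfold F1; rewrite Rmult_0_r, Ropp_0, exp_0, Rmult_0_r, cos_0; ring.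
    apply F1_der. apply HC. intros; unfold F1; auto_derive; auto.
  - apply continuity_pt_ext with (f := fun y => ext_q (F2 p q) q y / ext_q Fe 1 y).
    { intros y; symmetry; apply v_comp. }
    apply continuity_pt_div; auto; [|apply H_neq].
    apply ext_q_cont. unfold F2; rewrite Rmult_0_r, Ropp_0, exp_0, Rmult_0_r, sin_0; ring.
    apply F2_der. apply HC. intros; unfold F2; auto_derive; auto.
Qed.

Lemma u_id z y : u_fun z y = (z * RtoC (exp (- y)) - v_fun z y)%C.
Proof.
  destruct (Req_dec y 0) as [->|Hy].
  - unfold u_fun, v_fun. destruct Req_EM_T; [|congruence].
    rewrite Ropp_0, exp_0. ring.
  - rewrite v_form by auto. unfold u_fun. destruct Req_EM_T; [contradiction|].
    pose proof (expm1_neq y Hy) as Hn.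
    assert (Hp : exp y <> 0) by (pose proof (exp_pos y); lra).
    rewrite exp_Ropp, RtoC_inv by auto. rewrite !RtoC_minus.
    assert (RtoC (exp y) - RtoC 1 <> 0)%C by (rewrite <- RtoC_minus; apply RtoC_neq0; auto).
    field. split; auto. apply RtoC_neq0; auto.
Qed.

Lemma fst_lim (f : R -> C) x : filterlim f (locally x) (locally (f x)) ->
  filterlim (fun y => fst (f y)) (locally x) (locally (fst (f x))).
Proof.
  intros H. apply filterlim_locally. intros eps.
  rewrite filterlim_locally in H. specialize (H eps).
  apply (filter_imp _ _ (fun y (Hy : ball (f x) eps (f y)) => proj1 Hy) H).
Qed.

Lemma snd_lim (f : R -> C) x : filterlim f (locally x) (locally (f x)) ->
  filterlim (fun y => snd (f y)) (locally x) (locally (snd (f x))).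
Proof.
  intros H. apply filterlim_locally. intros eps.
  rewrite filterlim_locally in H. specialize (H eps).
  apply (filter_imp _ _ (fun y (Hy : ball (f x) eps (f y)) => proj2 Hy) H).
Qed.

Lemma u_cont p q x : filterlim (u_fun (p,q)) (locally x) (locally (u_fun (p,q) x)).
Proof.
  pose proof (v_cont p q x) as Hv.
  apply C_cont.
  - apply continuity_pt_ext with (f := fun y => p * exp (- y) - fst (v_fun (p,q) y)).
    { intros y. rewrite u_id. simpl. ring. }
    apply continuity_pt_minus.
    + apply cont_of_derive. auto_derive; auto.
    + apply continuity_pt_filterlim.
      apply (fst_lim _ _ Hv).
  - apply continuity_pt_ext with (f := fun y => q * exp (- y) - snd (v_fun (p,q) y)).
    { intros y. rewrite u_id. simpl. ring. }
    apply continuity_pt_minus.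
    + apply cont_of_derive. auto_derive; auto.
    + apply continuity_pt_filterlim.
      apply (snd_lim _ _ Hv).
Qed.

Theorem lemma5p2 :
  forall a : R, -1 < a ->
  exists C0 C1 C2 eps1 eps2 : R,
    0 < C0 /\ 0 < C1 /\ 0 < C2 /\ 0 < eps1 /\ 0 < eps2 /\
    forall z : C, Re z = a ->
      bounded_on_nonneg (u_fun z) /\ continuous_on_nonneg (u_fun z) /\
      bounded_on_nonneg (v_fun z) /\ continuous_on_nonneg (v_fun z) /\
      (forall y : R, 0 <= y -> Cmod (v_fun z y) <= C1 * Cmod z * exp (- eps1 * y)) /\
      (forall x : R, C0 <= x -> Cmod (v_fun z x) <= C2 * exp (- eps2 * x)).
Proof.
  intros a Ha. set (d := 1 + Rmin a 0).
  assert (Hd0 : 0 < d). { unfold d, Rmin; destruct Rle_dec; lra. }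
  assert (Hd1 : d <= 1). { unfold d; pose proof (Rmin_r a 0); lra. }
  exists 1, (6 / d), 4, (d/2), (d/2).
  assert (H6 : 0 < 6 / d) by (unfold Rdiv; apply Rmult_lt_0_compat; [lra|apply Rinv_0_lt_compat; lra]).
  split; [lra|]. split; [auto|]. split; [lra|]. split; [lra|]. split; [lra|].
  intros [p q] Hre. simpl in Hre. subst p.
  pose proof (Cmod_ge_0 (a,q)) as HC.
  assert (VB : forall y, 0 <= y -> Cmod (v_fun (a,q) y) <= 6 / d * Cmod (a,q)).
  { intros y Hy. eapply Rle_trans; [apply vb1; auto|]. fold d.
    assert (exp (- (d/2) * y) <= 1). { rewrite <- exp_0. apply exp_le_inc. nra. }
    assert (0 <= 6 / d * Cmod (a,q)) by nra.
    pose proof (exp_pos (- (d/2) * y)). nra. }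
  assert (CW : forall f : R -> C, (forall x, filterlim f (locally x) (locally (f x))) ->
     continuous_on_nonneg f).
  { intros f Hf x _. eapply filterlim_filter_le_1; [apply filter_le_within|apply Hf]. }
  split; [|split; [|split; [|split; [|split]]]].
  - exists (Cmod (a,q) + 6 / d * Cmod (a,q)). intros y Hy.
    rewrite u_id. unfold Cminus. eapply Rle_trans; [apply Cmod_triangle|].
    rewrite Cmod_opp, Cmod_mult, Cmod_R, Rabs_right by (left; apply exp_pos).
    assert (exp (- y) <= 1). { rewrite <- exp_0. apply exp_le_inc. lra. }
    pose proof (VB y Hy). pose proof (exp_pos (-y)). nra.
  - apply CW. intros; apply u_cont.
  - exists (6 / d * Cmod (a,q)). exact VB.
  - apply CW. intros; apply v_cont.
  - intros y Hy. apply vb1; auto.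
  - intros x Hx. apply vb2; auto.
Qed.
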